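(* Fix $0<\delta<1$ and let $\epsilon=\frac12+\frac\delta2$, $\epsilon'=\frac12$, $c=\frac8\delta$. Then for even $n$, $|\mathcal G_n|\ge 2^{\Omega(n^{2-\epsilon}\log n)}$.
   Context: For even $n$, a good graph on $n$ vertices is a bipartite graph with vertex set $[n]$ and parts $\{1,\dots,\frac n2\}$ and $\{\frac n2+1,\dots,n\}$, having exactly $\lfloor(\frac n2)^{2-\epsilon}\rfloor$ edges, such that every induced subgraph with at most $(\frac n2)^{\epsilon'}$ vertices has a vertex of degree less than $c$ (within that subgraph). $\mathcal G_n$ denotes the set of good graphs on $n$ vertices. *)

(* Defs.v *)
From HB Require Import structures.
From mathcomp Require Import all_boot all_order all_algebra.
From mathcomp Require Import all_classical all_reals.
From mathcomp Require Import exp.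
Set Implicit Arguments. Unset Strict Implicit. Unset Printing Implicit Defensive.
Import Order.TTheory GRing.Theory Num.Theory.
Local Open Scope ring_scope.

(* Vertices [n] are encoded as 'I_n = {0,...,n-1} (vertex k+1 of the paper is k).
   Left part: indices < n/2; right part: indices >= n/2.
   A bipartite graph with these parts is encoded by its edge set
   E : {set 'I_n * 'I_n}, each edge stored once as (left endpoint, right endpoint). *)

Definition bip_edges (n : nat) (E : {set 'I_n * 'I_n}) : bool :=
  [forall e in E, (e.1 < n./2)%N && (n./2 <= e.2)%N].

Definition adj (n : nat) (E : {set 'I_n * 'I_n}) (u v : 'I_n) : bool :=
  ((u, v) \in E) || ((v, u) \in E).

Definition deg_in (n : nat) (E : {set 'I_n * 'I_n}) (S : {set 'I_n}) (v : 'I_n) : nat :=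
  #|[set u in S | adj E u v]|.

Definition good_graph (R : realType) (eps eps' c : R) (n : nat)
    (E : {set 'I_n * 'I_n}) : bool :=
  [&& bip_edges E,
      (#|E|%:Z == Num.floor ((n./2)%:R `^ (2 - eps)))
    & [forall S : {set 'I_n},
        ((S != finset.set0) && ((#|S|)%:R <= (n./2)%:R `^ eps'))
          ==> [exists v in S, (deg_in E S v)%:R < c]]].

Definition good_graphs (R : realType) (eps eps' c : R) (n : nat)
    : {set {set 'I_n * 'I_n}} :=
  [set E | good_graph eps eps' c E].

(* Main.v *)
Require Import Defs.
From HB Require Import structures.
From mathcomp Require Import all_boot all_order all_algebra.
From mathcomp Require Import all_classical all_reals.
From mathcomp Require Import exp.
From mathcomp Require Import sequences.
From mathcomp Require Import zify ring lra.
Import Order.TTheory GRing.Theory Num.Theory.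
Local Open Scope ring_scope.

Lemma ffact_le_exp (q t : nat) : (q ^_ t <= q ^ t)%N.
Proof.
elim: t q => [|t IH] q; first by rewrite ffactn0 expn0.
rewrite ffactnS expnS leq_mul2l; apply/orP; right.
apply: leq_trans (IH _) _; case: t {IH} => [|t]; first by rewrite !expn0.
by rewrite leq_exp2r //; lia.
Qed.

Lemma binffact (M m k : nat) : (k <= m)%N ->
  ('C(M, m) * m ^_ k = 'C(M - k, m - k) * M ^_ k)%N.
Proof.
elim: k => [|k IH] hk; first by rewrite !ffactn0 !subn0.
rewrite !ffactnSr mulnA IH; last lia.
have -> : (m - k = (m - k.+1).+1)%N by lia.
have h := mul_bin_diag (M - k) (m - k.+1).
have e : ((M - k).-1 = M - k.+1)%N by lia.
rewrite e in h.
rewrite -[in LHS]mulnA [in LHS](mulnC (M^_k)) [in LHS]mulnA.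
rewrite [in LHS](mulnC _ (m - k.+1).+1) -h. ring.
Qed.

Lemma ffact_ratio (M m k : nat) : (m <= M)%N ->
  (m ^_ k * M ^ k <= M ^_ k * m ^ k)%N.
Proof.
move=> hmM; elim: k => [|k IH]; first by rewrite !ffactn0 !expn0.
rewrite !ffactnSr !expnS.
have h : ((m - k) * M <= (M - k) * m)%N.
  case: (leqP m k) => hk; first by have -> : (m - k = 0)%N by lia.
  nia.
have e1 : (m ^_ k * (m - k) * (M * M ^ k) = (m ^_ k * M ^ k) * ((m - k) * M))%N by ring.
have e2 : (M ^_ k * (M - k) * (m * m ^ k) = (M ^_ k * m ^ k) * ((M - k) * m))%N by ring.
by rewrite e1 e2; apply: leq_mul.
Qed.

Lemma binratio (M m k : nat) : (k <= m)%N -> (m <= M)%N ->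
  ('C(M - k, m - k) * M ^ k <= 'C(M, m) * m ^ k)%N.
Proof.
move=> hk hm.
have hpos : (0 < M ^_ k)%N by rewrite ffact_gt0; lia.
rewrite -(leq_pmul2r hpos).
have e1 : ('C(M - k, m - k) * M ^ k * M ^_ k = ('C(M - k, m - k) * M ^_ k) * M ^ k)%N by ring.
rewrite e1 -binffact //.
have e2 : ('C(M, m) * m ^_ k * M ^ k = 'C(M, m) * (m ^_ k * M ^ k))%N by ring.
have e3 : ('C(M, m) * m ^ k * M ^_ k = 'C(M, m) * (M ^_ k * m ^ k))%N by ring.
rewrite e2 e3 leq_mul2l; apply/orP; right; exact: ffact_ratio.
Qed.

Lemma binlow (M m : nat) : (m <= M)%N -> (M ^ m <= 'C(M, m) * m ^ m)%N.
Proof.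
move=> hm.
have h := @ffact_ratio M m m hm.
rewrite ffactnn -bin_ffact in h.
have hpos : (0 < m`!)%N by apply: fact_gt0.
rewrite -(leq_pmul2l hpos).
have e1 : (m`! * ('C(M, m) * m ^ m) = 'C(M, m) * m`! * m ^ m)%N by ring.
by rewrite e1.
Qed.

Lemma bin_le_exp (n s : nat) : ('C(n, s) <= n ^ s)%N.
Proof.
apply: leq_trans (ffact_le_exp n s); rewrite -bin_ffact.
by rewrite leq_pmulr // fact_gt0.
Qed.

Section Real.
Variable R : realType.

Lemma expR1_le4 : expR (1 : R) <= 4.
Proof.
have h : 1 + (- (1/2)) <= expR (- (1/2) : R) by apply: expR_ge1Dx.
rewrite expRN in h.
have hp : 0 < expR (1/2 : R) by apply: expR_gt0.
have h2 : expR (1/2 : R) <= 2.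
  have : 1/2 <= (expR (1/2 : R))^-1 by lra.
  rewrite -[X in X <= _ -> _]invrK lef_pV2 ?posrE //; last by lra.
  lra.
have -> : (1 : R) = 1/2 + 1/2 by lra.
rewrite expRD. nra.
Qed.

Lemma pow_fact_le (x : R) (t : nat) : 0 <= x -> x ^+ t / (t`!)%:R <= expR x.
Proof.
move=> hx; case: t => [|t].
  rewrite expr0 fact0 divr1; apply: le_trans (expR_ge1Dx x); lra.
have := expR_ge1Dxn t hx.
have : 0 <= x ^+ t.+1 / (t.+1)`!%:R by apply: divr_ge0; [apply: exprn_ge0|apply: ler0n].
lra.
Qed.

Lemma tt_fact (t : nat) : (t%:R : R) ^+ t <= 4 ^+ t * (t`!)%:R.
Proof.
have hf : 0 < (t`!)%:R :> R by rewrite ltr0n fact_gt0.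
have h := @pow_fact_le (t%:R) t (ler0n R t).
rewrite ler_pdivrMr // in h.
apply: le_trans h _; apply: ler_wpM2r; first exact: ltW.
rewrite -[t%:R]mulr1 expRM_natl.
apply: lerXn2r; rewrite ?nnegrE ?expR_ge0 //.
exact: expR1_le4.
Qed.

Lemma bin_term (q t : nat) (x : R) : (0 < t)%N -> 0 <= x ->
  ('C(q, t))%:R * x ^+ t <= (4 * q%:R * x / t%:R) ^+ t.
Proof.
move=> ht hx.
have hf : 0 < (t`!)%:R :> R by rewrite ltr0n fact_gt0.
have htR : 0 < t%:R :> R by rewrite ltr0n.
have h1 : ('C(q, t))%:R * (t`!)%:R <= (q%:R : R) ^+ t.
  by rewrite -natrM -natrX ler_nat bin_ffact ffact_le_exp.
have h2 := tt_fact t.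
rewrite !expr_div_n !exprMn.
have hxt : 0 <= x ^+ t by apply: exprn_ge0.
have htt : 0 < (t%:R : R) ^+ t by apply: exprn_gt0.
rewrite ler_pdivlMr //.
have hC : 0 <= ('C(q, t))%:R :> R by apply: ler0n.
have h3 : ('C(q, t))%:R * (t%:R : R) ^+ t <= ('C(q, t))%:R * (4 ^+ t * (t`!)%:R)
  by apply: ler_wpM2l.
have h4 : ('C(q, t))%:R * (4 ^+ t * (t`!)%:R) <= 4 ^+ t * (q%:R : R) ^+ t.
  rewrite mulrCA; apply: ler_wpM2l; first by apply: exprn_ge0; lra.
  done.
have := ler_wpM2r hxt (le_trans h3 h4).
move=> h; apply: le_trans _ (le_trans h _); first by rewrite le_eqVlt; apply/orP; left; apply/eqP; ring.
by rewrite le_eqVlt; apply/orP; left; apply/eqP; ring.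
Qed.
End Real.

Lemma sum_by_card (R : realType) (T : finType) (B : {set T}) (P : pred nat) (F : nat -> R) :
  \sum_(X : {set T} | (X \subset B) && P #|X|) F #|X| =
  \sum_(t < #|B|.+1 | P t) ('C(#|B|, t))%:R * F t.
Proof.
rewrite (partition_big (fun X : {set T} => (inord #|X| : 'I_(#|B|.+1))) (fun t : 'I_(#|B|.+1) => P t)) /=; last first.
  move=> X /andP[hX hP]; rewrite inordK //; rewrite ltnS; exact: subset_leq_card.
apply: eq_bigr => t Pt.
rewrite (eq_bigr (fun=> F t)); last first.
  move=> X /andP[/andP[hX _] /eqP <-]; rewrite inordK //; rewrite ltnS; exact: subset_leq_card.
rewrite (eq_bigl (fun X => X \in [set X : {set T} | (X \subset B) & (#|X| == t)])); last first.
  move=> X; rewrite inE; apply/idP/idP.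
    move=> /andP[/andP[hX _] /eqP <-]; rewrite hX inordK //= ltnS; exact: subset_leq_card.
  move=> /andP[hX /eqP ht]; rewrite hX ht /= Pt /=; apply/eqP; apply: val_inj; rewrite /= inordK //.
rewrite sumr_const cards_draws mulr_natl.
done.
Qed.

Section Graph.
Variable N : nat.
Local Notation n := (N + N)%N.

Definition Pset : {set 'I_n * 'I_n} := [set e : 'I_n * 'I_n | (e.1 < N)%N && (N <= e.2)%N].

Lemma card_left : #|[set i : 'I_n | (i < N)%N]| = N.
Proof.
have -> : [set i : 'I_n | (i < N)%N] = (@lshift N N) @: [set: 'I_N].
  apply/setP => i; rewrite inE; apply/idP/imsetP.
    move=> hi; exists (Ordinal hi); first by rewrite inE.
    by apply: val_inj.
  by move=> [j _ ->] /=.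
by rewrite card_imset ?cardsT ?card_ord //; exact: lshift_inj.
Qed.

Lemma card_right : #|[set i : 'I_n | (N <= i)%N]| = N.
Proof.
have -> : [set i : 'I_n | (N <= i)%N] = (@rshift N N) @: [set: 'I_N].
  apply/setP => i; rewrite inE; apply/idP/imsetP.
    move=> hi; have hi' : (i - N < N)%N by have := ltn_ord i; lia.
    exists (Ordinal hi'); first by rewrite inE.
    by apply: val_inj => /=; lia.
  by move=> [j _ ->] /=; lia.
by rewrite card_imset ?cardsT ?card_ord //; exact: rshift_inj.
Qed.

Lemma card_Pset : #|Pset| = (N * N)%N.
Proof.
have -> : Pset = finset.setX [set i : 'I_n | (i < N)%N] [set i : 'I_n | (N <= i)%N].
  by apply/setP => e; rewrite !inE.
by rewrite cardsX card_left card_right.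
Qed.

Variable R : realType.
Variable m : nat.

Definition Aset : {set {set 'I_n * 'I_n}} :=
  [set E : {set 'I_n * 'I_n} | (E \subset Pset) && (#|E| == m)].
Definition XT (T : {set 'I_n * 'I_n}) : {set {set 'I_n * 'I_n}} :=
  [set E in Aset | T \subset E].

Lemma card_XT_nat T : (m <= #|Pset|)%N ->
  (#|XT T| * #|Pset| ^ #|T| <= 'C(#|Pset|, m) * m ^ #|T|)%N.
Proof.
move=> hm.
have [E0 hE0|h0] := pickP (mem (XT T)); last first.
  have -> : #|XT T| = 0%N by apply: eq_card0 => E; exact: h0.
  by rewrite mul0n.
move: hE0; rewrite !inE => /andP[/andP[hE0P /eqP hE0m] hTE0].
have hTm : (#|T| <= m)%N by rewrite -hE0m; exact: subset_leq_card.
have hTP : T \subset Pset by exact: (fintype.subset_trans hTE0 hE0P).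
have hX : (#|XT T| <= 'C(#|Pset| - #|T|, m - #|T|))%N.
  have <- : #|(fun E => E :\: T) @: XT T| = #|XT T|.
    apply: card_in_imset => E1 E2; rewrite !inE => /andP[_ h1] /andP[_ h2] e.
    apply/setP => x; have : (x \in E1 :\: T) = (x \in E2 :\: T) by rewrite e.
    rewrite !inE.
    case hx: (x \in T) => /=; last by [].
    by rewrite (fintype.subsetP h1 x hx) (fintype.subsetP h2 x hx).
  have hcd : #|[set D : {set 'I_n * 'I_n} | (D \subset Pset :\: T) & (#|D| == m - #|T|)%N]|
      = 'C(#|Pset| - #|T|, m - #|T|).
    by rewrite cards_draws cardsD (finset.setIidPr hTP).
  rewrite -hcd; apply: subset_leq_card; apply/fintype.subsetP => D /imsetP[E hE ->].
  move: hE; rewrite !inE => /andP[/andP[hEP /eqP hEm] hTE].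
  rewrite finset.setSD //= cardsD (finset.setIidPr hTE) hEm.
  by rewrite eqxx.
apply: leq_trans _ (@binratio #|Pset| m #|T| hTm hm).
by rewrite leq_mul2r hX orbT.
Qed.


Lemma card_pairs (Q : 'I_n -> 'I_n -> bool) :
  #|[set p : 'I_n * 'I_n | Q p.1 p.2]| = (\sum_(u : 'I_n) \sum_(v : 'I_n) (Q u v : nat))%N.
Proof.
rewrite pair_big /= -sum1_card big_mkcond /=.
by apply: eq_bigr => [[u v]] _; rewrite inE /=; case: (Q u v).
Qed.

Lemma card_cond (S : {set 'I_n}) (Q : 'I_n -> bool) :
  #|[set u in S | Q u]| = (\sum_(u : 'I_n) ((u \in S) && Q u : nat))%N.
Proof.
rewrite -sum1_card big_mkcond /=.
by apply: eq_bigr => u _; rewrite inE; case: (_ && _).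
Qed.

Lemma sum_deg_le (E : {set 'I_n * 'I_n}) (S : {set 'I_n}) :
  (\sum_(v in S) deg_in E S v <= 2 * #|E :&: finset.setX S S|)%N.
Proof.
have h1 : forall v, (deg_in E S v <= #|[set u in S | (u, v) \in E]| + #|[set u in S | (v, u) \in E]|)%N.
  move=> v; rewrite /deg_in /adj.
  have -> : [set u in S | ((u, v) \in E) || ((v, u) \in E)] =
     [set u in S | (u, v) \in E] :|: [set u in S | (v, u) \in E].
    by apply/setP => u; rewrite !inE; case: (u \in S).
  by rewrite cardsU leq_subr.
apply: leq_trans (leq_sum _ (fun v (_ : v \in S) => h1 v)) _.
rewrite big_split /= mul2n -addnn; apply: leq_add.
- have -> : #|E :&: finset.setX S S| = #|[set p : 'I_n * 'I_n | ((p.1 \in S) && (p.2 \in S)) && ((p.1, p.2) \in E)]|.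
    by apply: eq_card => [[u v]]; rewrite !inE /= andbC.
  rewrite (card_pairs (fun u v => ((u \in S) && (v \in S)) && ((u, v) \in E))) exchange_big /= big_mkcond /=.
  apply: leq_sum => v _; rewrite card_cond.
  case hv: (v \in S) => /=; last by [].
  by apply: eq_leq; apply: eq_bigr => u _; rewrite andbT.
- have -> : #|E :&: finset.setX S S| = #|[set p : 'I_n * 'I_n | ((p.1 \in S) && (p.2 \in S)) && ((p.1, p.2) \in E)]|.
    by apply: eq_card => [[u v]]; rewrite !inE /= andbC.
  rewrite (card_pairs (fun u v => ((u \in S) && (v \in S)) && ((u, v) \in E))) big_mkcond /=.
  apply: leq_sum => v _; rewrite card_cond.
  case hv: (v \in S) => /=; last by [].
  by apply: eq_leq; apply: eq_bigr => u _.
Qed.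


Definition PS : pred nat := fun s => (2 < s)%N && (s * s <= N)%N.
Definition PT (c : R) (s : nat) : pred nat := fun t => c * s%:R / 2 <= t%:R.

Lemma half_nn : ((N + N)./2 = N)%N.
Proof. by rewrite addnn doubleK. Qed.

Lemma bad_cover (eps c : R) (E : {set 'I_n * 'I_n}) :
  m%:Z = Num.floor (N%:R `^ (2 - eps)) -> 8 < c ->
  E \in Aset -> ~~ good_graph eps (1/2) c E ->
  exists2 S : {set 'I_n}, (S \subset [set: 'I_n]) && PS #|S| &
    exists2 T : {set 'I_n * 'I_n}, (T \subset finset.setX S S) && PT c #|S| #|T| & E \in XT T.
Proof.
move=> hm hc hE; move: (hE); rewrite inE => /andP[hEP /eqP hEm].
rewrite /good_graph.
have hb : bip_edges E.
  apply/forall_inP => e he; have := fintype.subsetP hEP e he; rewrite inE half_nn; done.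
have hcard : #|E|%:Z == Num.floor (((N + N)./2)%:R `^ (2 - eps)) by rewrite half_nn hEm hm.
rewrite hb hcard /= => /forallPn [S]; rewrite negb_imply => /andP[/andP[hS0 hSle] hnex].
have hdeg : forall v, v \in S -> c <= (deg_in E S v)%:R.
  move=> v hv; move/exists_inPn: hnex => /(_ v hv).
  by rewrite -leNgt.
have hdegS : forall v, (deg_in E S v <= #|S|)%N.
  move=> v; apply: subset_leq_card; apply/fintype.subsetP => u; rewrite inE => /andP[] //.
exists S.
  rewrite finset.subsetT /= /PS; apply/andP; split.
  - have [v hv] := set0Pn _ hS0.
    have h1 := hdeg v hv.
    have h2 : ((deg_in E S v)%:R : R) <= #|S|%:R by rewrite ler_nat.
    have : (8 : R) < #|S|%:R by lra.
    move=> h; have : (8 < #|S|)%N by rewrite -(ltr_nat R). by move=> h8; apply: leq_trans h8.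
  - rewrite half_nn in hSle.
    have h0 : (0 : R) <= #|S|%:R by apply: ler0n.
    have hsq : (#|S|%:R : R) ^+ 2 <= (N%:R `^ (1/2)) ^+ 2.
      by apply: lerXn2r; rewrite ?nnegrE ?powR_ge0.
    have e : (N%:R `^ (1/2)) ^+ 2 = N%:R :> R.
      rewrite -powR_mulrn ?powR_ge0 // -powRrM.
      rewrite (_ : 1 / 2 * 2%:R = 1 :> R); last by lra.
      by rewrite powRr1 ?ler0n.
    rewrite e -natrX ler_nat in hsq.
    by rewrite mulnn.
exists (E :&: finset.setX S S).
  rewrite subsetIr /= /PT.
  have hsum := sum_deg_le E S.
  have : \sum_(v in S) c <= \sum_(v in S) ((deg_in E S v)%:R : R) by apply: ler_sum => v hv; exact: hdeg.
  rewrite sumr_const -natr_sum.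
  have : ((\sum_(v in S) deg_in E S v)%N%:R : R) <= (2 * #|E :&: finset.setX S S|)%N%:R by rewrite ler_nat.
  rewrite natrM -mulr_natr.
  move=> h1 h2; have := le_trans h2 h1. lra.
by rewrite inE hE subsetIl.
Qed.

End Graph.

Section Analytic.
Variable R : realType.

Lemma sqrt_bound (N s : nat) : (s * s <= N)%N -> (s%:R : R) <= N%:R `^ (1/2).
Proof.
move=> h.
have hs : (s%:R : R) = ((s * s)%N%:R) `^ (1/2).
  rewrite natrM -expr2 -powR_mulrn ?ler0n // -powRrM.
  by rewrite (_ : 2%:R * (1/2) = 1 :> R) ?powRr1 ?ler0n //; lra.
rewrite hs; apply: ge0_ler_powR; rewrite ?nnegrE ?ler0n ?ler_nat //; lra.
Qed.

Lemma sx_bound (delta : R) (N s m : nat) : (0 < N)%N -> (s * s <= N)%N ->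
  m%:R <= N%:R `^ (2 - (1/2 + delta/2)) ->
  s%:R * (m%:R / (N * N)%N%:R) <= N%:R `^ (- (delta/2)).
Proof.
move=> hN hs hm.
have hNR : (0 : R) < N%:R by rewrite ltr0n.
have hNN : (0 : R) < (N * N)%N%:R by rewrite ltr0n muln_gt0 hN.
have h1 : (s%:R : R) <= N%:R `^ (1/2) := sqrt_bound N s hs.
rewrite mulrA ler_pdivrMr //.
have e : N%:R `^ (- (delta / 2)) * (N * N)%N%:R = N%:R `^ (1/2) * N%:R `^ (2 - (1 / 2 + delta / 2)) :> R.
  rewrite -powRD; last by apply/implyP => _; rewrite pnatr_eq0 -lt0n.
  rewrite natrM -expr2 -powR_mulrn ?ler0n // -powRD; last by apply/implyP => _; rewrite pnatr_eq0 -lt0n.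
  by congr (_ `^ _); lra.
rewrite e; apply: ler_pM => //; apply: ler0n.
Qed.

Lemma term_bound (delta : R) (N s m t : nat) : 0 < delta -> delta <= 1 ->
  (0 < N)%N -> (2 < s)%N -> (s * s <= N)%N ->
  m%:R <= N%:R `^ (2 - (1/2 + delta/2)) ->
  8 / delta * s%:R / 2 <= t%:R ->
  ('C(s * s, t))%:R * (m%:R / (N * N)%N%:R) ^+ t <= (N%:R ^+ (2 * s))^-1 :> R.
Proof.
move=> hd0 hd1 hN hs3 hs hm ht.
have hsR : (3 : R) <= s%:R by rewrite ler_nat.
have htR : 0 < t%:R :> R.
  apply: lt_le_trans ht; apply: mulr_gt0; last lra.
  apply: mulr_gt0; [apply: divr_gt0; lra| lra].
have ht0 : (0 < t)%N by rewrite -(ltr_nat R).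
set x := m%:R / (N * N)%N%:R.
have hx : 0 <= x by apply: divr_ge0; apply: ler0n.
have hsx := sx_bound delta N s m hN hs hm; rewrite -/x in hsx.
apply: le_trans (bin_term R (s * s) t x ht0 hx) _.
have hq : 4 * (s * s)%N%:R * x / t%:R <= N%:R `^ (- (delta/2)).
  rewrite ler_pdivrMr // natrM.
  have h4 : 4 * s%:R <= t%:R :> R.
    have e : 8 / delta * s%:R / 2 * delta = 4 * s%:R by field; lra.
    have : 8 / delta * s%:R / 2 * delta <= t%:R * delta by apply: ler_wpM2r; lra.
    rewrite e => h; apply: le_trans h _; rewrite -[X in _ <= X]mulr1; apply: ler_wpM2l; lra.
  have hs0 : 0 <= s%:R * x by apply: mulr_ge0; [apply: ler0n|].
  set y := N%:R `^ (- (delta / 2)) in hsx *.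
  nra.
have hq0 : 0 <= 4 * (s * s)%N%:R * x / t%:R.
  apply: divr_ge0; last exact: ler0n.
  apply: mulr_ge0 => //; apply: mulr_ge0; [lra|apply: ler0n].
apply: le_trans (lerXn2r t _ _ hq) _; rewrite ?nnegrE ?powR_ge0 //.
rewrite -powR_mulrn ?powR_ge0 // -powRrM -powR_invn ?ler0n //.
have hN1 : (1 : R) <= N%:R by rewrite ler1n.
apply: ler_powR => //.
rewrite natrM.
have : 2 * s%:R <= delta / 2 * t%:R.
  have : 8 / delta * s%:R / 2 * (delta / 2) = 2 * s%:R by field; lra.
  move=> <-; rewrite [delta / 2 * _]mulrC; apply: ler_wpM2r; lra.
lra.
Qed.
End Analytic.

Lemma sum_ind (R : realType) (T : finType) (A : {set T}) :
  \sum_(x : T) ((x \in A)%:R : R) = #|A|%:R.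
Proof.
rewrite -[RHS](sumr_const (mem A) (1 : R)) [RHS]big_mkcond /=.
by apply: eq_bigr => x _; case: (x \in A).
Qed.

Lemma sum_const_le (R : realType) (k : nat) (P : pred nat) (b : R) : 0 <= b ->
  \sum_(t < k | P t) b <= k%:R * b.
Proof.
move=> hb; rewrite big_mkcond /=.
apply: le_trans (_ : \sum_(t < k) b <= _).
  by apply: ler_sum => t _; case: (P t).
by rewrite sumr_const card_ord mulr_natl.
Qed.

Lemma pick_le (R : realType) (I : finType) (P : pred I) (F : I -> R) (i : I) :
  P i -> (forall j, P j -> 0 <= F j) -> F i <= \sum_(j | P j) F j.
Proof.
move=> hi h; rewrite (bigD1 i) //= -[X in X <= _]addr0; apply: lerD => //.
by apply: sumr_ge0 => j /andP[hj _]; exact: h.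
Qed.

Section Bad.
Variable R : realType.
Variables (delta : R) (N m : nat).
Hypotheses (hd0 : 0 < delta) (hd1 : delta < 1) (hN : (100 <= N)%N)
  (hmf : m%:Z = Num.floor (N%:R `^ (2 - (1/2 + delta/2)))) (hmM : (m <= N * N)%N).

Lemma hmR : m%:R <= N%:R `^ (2 - (1/2 + delta/2)) :> R.
Proof. by have := floor_le (N%:R `^ (2 - (1/2 + delta/2)) : R); rewrite -hmf -pmulrn. Qed.

Lemma inner_bound (S : {set 'I_(N + N)}) : PS N #|S| ->
  \sum_(T : {set 'I_(N + N) * 'I_(N + N)} | (T \subset finset.setX S S) && PT R (8 / delta) #|S| #|T|)
     (#|XT N m T|%:R : R)
  <= (N.+1)%:R * ('C(N * N, m))%:R * (N%:R ^+ (2 * #|S|))^-1.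
Proof.
move=> /andP[hs3 hss].
have hP := card_Pset N.
have hN0 : (0 < N)%N by lia.
set C := ('C(N * N, m))%:R : R.
have hC : 0 <= C by apply: ler0n.
set x := (m%:R / (N * N)%N%:R : R).
have hx : 0 <= x by apply: divr_ge0; apply: ler0n.
apply: le_trans (_ : \sum_(T : {set 'I_(N + N) * 'I_(N + N)} | (T \subset finset.setX S S) && PT R (8 / delta) #|S| #|T|)
     (C * x ^+ #|T|) <= _).
  apply: ler_sum => T _.
  have h := card_XT_nat N m T; rewrite hP in h; have := h hmM.
  rewrite -(ler_nat R) !natrM !natrX => h2.
  have hM : (0 : R) < ((N * N)%N%:R) ^+ #|T| by apply: exprn_gt0; rewrite ltr0n muln_gt0 hN0.
  rewrite /x expr_div_n mulrA ler_pdivlMr //.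
rewrite (sum_by_card R _ (finset.setX S S) (PT R (8 / delta) #|S|) (fun t => C * x ^+ t)) cardsX.
apply: le_trans (_ : \sum_(t < (#|S| * #|S|).+1 | PT R (8 / delta) #|S| t) (C * (N%:R ^+ (2 * #|S|))^-1) <= _).
  apply: ler_sum => t ht.
  rewrite mulrCA; apply: ler_wpM2l => //.
  exact: (term_bound R delta N #|S| m t hd0 (ltW hd1) hN0 hs3 hss hmR ht).
have hb0 : 0 <= C * (N%:R ^+ (2 * #|S|))^-1.
  by apply: mulr_ge0 => //; rewrite invr_ge0; apply: exprn_ge0; apply: ler0n.
apply: le_trans (sum_const_le R _ _ _ hb0) _.
rewrite -mulrA; apply: ler_wpM2r.
  by apply: mulr_ge0 => //; rewrite invr_ge0; apply: exprn_ge0; apply: ler0n.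
by rewrite ler_nat ltnS.
Qed.


Lemma outer_bound :
  \sum_(S : {set 'I_(N + N)} | (S \subset [set: 'I_(N + N)]) && PS N #|S|)
    ((N.+1)%:R * ('C(N * N, m))%:R * (N%:R ^+ (2 * #|S|))^-1 : R)
  <= ('C(N * N, m))%:R / 2.
Proof.
have hN0 : (0 < N)%N by lia.
have hNR : (100 : R) <= N%:R by rewrite ler_nat.
set C := ('C(N * N, m))%:R : R.
have hC : 0 <= C by apply: ler0n.
rewrite (sum_by_card R _ [set: 'I_(N + N)] (PS N) (fun s => (N.+1)%:R * C * (N%:R ^+ (2 * s))^-1)).
rewrite cardsT card_ord.
set b := (N.+1)%:R * C * (8 / N%:R ^+ 3).
have hb0 : 0 <= b.
  apply: mulr_ge0; first by apply: mulr_ge0 => //; apply: ler0n.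
  by apply: divr_ge0 => //; apply: exprn_ge0; apply: ler0n.
apply: le_trans (_ : \sum_(s < (N + N).+1 | PS N s) b <= _).
  apply: ler_sum => s /andP[hs3 _].
  rewrite /b mulrCA; apply: ler_wpM2l; first by apply: mulr_ge0 => //; apply: ler0n.
  have hB : ('C(N + N, s))%:R <= ((N + N)%N%:R : R) ^+ s by rewrite -natrX ler_nat bin_le_exp.
  have hNp : (0 : R) < N%:R by rewrite ltr0n.
  have e : ((N + N)%N%:R : R) ^+ s * (N%:R ^+ (2 * s))^-1 = (2 / N%:R) ^+ s.
    rewrite natrD (_ : N%:R + N%:R = 2 * N%:R :> R); last by ring.
    rewrite exprMn mulnC exprM expr_div_n.
    have hz : N%:R ^+ s != 0 :> R by rewrite expf_neq0 // gt_eqF.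
    set z := N%:R ^+ s in hz *.
    by field.
  apply: le_trans (_ : ((N + N)%N%:R : R) ^+ s * (N%:R ^+ (2 * s))^-1 <= _).
    by apply: ler_wpM2r => //; rewrite invr_ge0; apply: exprn_ge0; apply: ler0n.
  rewrite e.
  have -> : 8 / N%:R ^+ 3 = (2 / N%:R) ^+ 3 :> R by rewrite expr_div_n; congr (_ / _); ring.
  apply: ler_wiXn2l => //.
  - by apply: divr_ge0 => //; apply: ler0n.
  - by rewrite ler_pdivrMr //; lra.
apply: le_trans (sum_const_le R _ _ _ hb0) _.
rewrite /b.
have hNp : (0 : R) < N%:R by rewrite ltr0n.
have hN3 : (0 : R) < N%:R ^+ 3 by apply: exprn_gt0.
rewrite !mulrA ler_pdivrMr //.
have key : ((N + N).+1)%:R * (N.+1)%:R * 8 * 2 <= N%:R ^+ 3 :> R.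
  rewrite (_ : ((N + N).+1)%:R = N%:R + N%:R + 1 :> R); last by rewrite -addn1 !natrD.
  rewrite (_ : (N.+1)%:R = N%:R + 1 :> R); last by rewrite -addn1 natrD.
  set y := N%:R in hNR *.
  rewrite !exprS expr0; nra.
have : ((N + N).+1)%:R * (N.+1)%:R * 8 * 2 * C <= N%:R ^+ 3 * C :> R by apply: ler_wpM2r.
lra.
Qed.


Lemma bad_bound :
  (#|Aset N m :\: good_graphs (1/2 + delta/2) (1/2) (8/delta) (N + N)|%:R : R)
  <= ('C(N * N, m))%:R / 2.
Proof.
set Bad := Aset N m :\: _.
apply: le_trans outer_bound.
apply: le_trans (_ : \sum_(S : {set 'I_(N + N)} | (S \subset [set: 'I_(N + N)]) && PS N #|S|)
  \sum_(T : {set 'I_(N + N) * 'I_(N + N)} | (T \subset finset.setX S S) && PT R (8 / delta) #|S| #|T|)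
     (#|XT N m T|%:R : R) <= _); last first.
  by apply: ler_sum => S /andP[_ hS]; apply: inner_bound.
have e : (#|Bad|%:R : R) = \sum_(E in Bad) (1 : R) by rewrite sumr_const.
rewrite e.
have hc : (8 : R) < 8 / delta.
  by rewrite ltr_pdivlMr // -[X in _ < X]mulr1 ltr_pM2l.
have hmid : \sum_(E in Bad) (1 : R) <= \sum_(E in Bad) \sum_(S : {set 'I_(N + N)} | (S \subset [set: 'I_(N + N)]) && PS N #|S|)
  \sum_(T : {set 'I_(N + N) * 'I_(N + N)} | (T \subset finset.setX S S) && PT R (8 / delta) #|S| #|T|)
     ((E \in XT N m T)%:R : R).
  apply: ler_sum => E; rewrite inE => /andP[hng hA].
  rewrite inE in hng.
  have [S hS [T hT hX]] := bad_cover N R m _ _ E hmf hc hA hng.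
  apply: le_trans (pick_le R _ _ _ S hS _).
    apply: le_trans (pick_le R _ _ _ T hT _); first by rewrite hX.
    by move=> j _; apply: ler0n.
  by move=> j _; apply: sumr_ge0 => k _; apply: ler0n.
apply: le_trans hmid _.
rewrite exchange_big /=; apply: ler_sum => S hS.
rewrite exchange_big /=; apply: ler_sum => T hT.
rewrite -sum_ind big_mkcond /=; apply: ler_sum => E _.
by case: (E \in Bad) => //; apply: ler0n.
Qed.

End Bad.

Section Final.
Variable R : realType.

Lemma ln2_le1 : ln (2 : R) <= 1.
Proof.
have h : (2 : R) <= expR 1 by have := expR_ge1Dx (1 : R); lra.
rewrite -[X in _ <= X](expRK 1) ler_ln ?posrE ?expR_gt0 //.
Qed.

Lemma lnN_ge1 (x : R) : 4 <= x -> 1 <= ln x.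
Proof.
move=> hx; have h := expR1_le4 R.
rewrite -[X in X <= _](expRK 1) ler_ln ?posrE ?expR_gt0 //; [lra | lra].
Qed.

Lemma final_ineq (delta : R) (N m : nat) : 0 < delta -> delta < 1 -> (100 <= N)%N ->
  m%:Z = Num.floor (N%:R `^ (2 - (1/2 + delta/2))) ->
  2 `^ (1/64 * (((N + N)%N%:R) `^ (2 - (1/2 + delta/2)) * ln ((N + N)%N%:R)))
  <= ((N%:R ^+ 2 / m%:R) ^+ m) / 2 :> R.
Proof.
move=> hd0 hd1 hN hmf.
set a := 2 - (1/2 + delta/2).
have ha1 : 1 <= a by rewrite /a; lra.
have ha2 : a <= 2 by rewrite /a; lra.
set x := N%:R : R.
have hx : 100 <= x by rewrite /x ler_nat.
have hx0 : 0 < x by lra.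
have hxa : x <= x `^ a by apply: le1r_powR; lra.
have hmR : m%:R <= x `^ a.
  by have := floor_le (x `^ a); rewrite -hmf -pmulrn.
have hmlow : x `^ a - 1 < m%:R.
  have := floorD1_gt (x `^ a); rewrite -hmf.
  by rewrite (_ : (m%:Z + 1)%:~R = m%:R + 1 :> R); [lra| rewrite intrD -pmulrn].
have hm0 : 0 < m%:R :> R by lra.
have hL : 1 <= ln x by apply: lnN_ge1; lra.
have hl2 := ln2_le1.
have hl20 : 0 < ln (2 : R) by apply: ln_gt0; lra.
have hq : x `^ (1/2) <= x ^+ 2 / m%:R.
  rewrite ler_pdivlMr //.
  apply: le_trans (_ : x `^ (1/2) * x `^ a <= _).
    by apply: ler_wpM2l; [apply: powR_ge0 | exact: hmR].
  rewrite -powRD; last by apply/implyP => _; lra.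
  rewrite -powR_mulrn; last lra.
  apply: ler_powR; rewrite /a; lra.
have hq0 : 0 < x `^ (1/2) by apply: powR_gt0.
have hlq : ln x / 2 <= ln (x ^+ 2 / m%:R).
  have hpq : 0 < x ^+ 2 / m%:R by exact: lt_le_trans hq0 hq.
  have : ln (x `^ (1/2)) <= ln (x ^+ 2 / m%:R) by rewrite ler_ln ?posrE.
  by rewrite ln_powR; lra.
have hpos : 0 < (x ^+ 2 / m%:R) ^+ m / 2.
  apply: divr_gt0; last lra.
  apply: exprn_gt0; exact: lt_le_trans hq0 hq.
rewrite -ler_ln ?posrE ?powR_gt0 //.
have hy : 0 < (x ^+ 2 / m%:R) ^+ m by apply: exprn_gt0; exact: lt_le_trans hq0 hq.
rewrite ln_powR ln_div ?posrE //.
rewrite lnXn; last by exact: lt_le_trans hq0 hq.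
rewrite -[X in _ <= X - _]mulr_natl.
have e2 : (N + N)%N%:R = 2 * x :> R by rewrite natrD /x; ring.
rewrite e2.
have hl2x : ln (2 * x) <= 2 * ln x.
  rewrite lnM ?posrE //; last lra.
have hp2x : (2 * x) `^ a <= 4 * x `^ a.
  rewrite powRM; [|lra|lra].
  apply: ler_wpM2r; first exact: powR_ge0.
  have h22 : (2 : R) `^ a <= 2 `^ 2 by apply: ler_powR; lra.
  have e4 : (2 : R) `^ 2 = 4 by rewrite powR_mulrn; [ring|lra].
  by rewrite e4 in h22.
have hxa0 : 0 <= x `^ a by apply: powR_ge0.
have hln2x0 : 0 <= ln (2 * x) by apply: ln_ge0; lra.
have hA : (2 * x) `^ a * ln (2 * x) <= 8 * (x `^ a * ln x).
  have h1 : (2 * x) `^ a * ln (2 * x) <= (4 * x `^ a) * ln (2 * x) by apply: ler_wpM2r.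
  have h2 : (4 * x `^ a) * ln (2 * x) <= (4 * x `^ a) * (2 * ln x) by apply: ler_wpM2l; lra.
  lra.
have hB : m%:R * (ln x / 2) <= m%:R * ln (x ^+ 2 / m%:R) by apply: ler_wpM2l; lra.
set P := x `^ a * ln x in hA *.
have hP : 100 <= P.
  rewrite /P; have : 100 <= x `^ a by lra.
  nra.
have hmP : m%:R * ln x >= (x `^ a - 1) * ln x by apply: ler_wpM2r; lra.
have hprod : 1 / 64 * ((2 * x) `^ a * ln (2 * x)) * ln 2 <= 1 / 64 * ((2 * x) `^ a * ln (2 * x)).
  rewrite -[X in _ <= X]mulr1; apply: ler_wpM2l => //.
  apply: mulr_ge0; [lra| apply: mulr_ge0 => //; apply: powR_ge0].
have hlx0 : 0 <= ln x by lra.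
have : (x `^ a - 1) * ln x = P - ln x by rewrite /P; ring.
move=> eP.
have hlxP : ln x <= P / 2.
  rewrite /P; have : 2 <= x `^ a by lra.
  nra.
lra.
Qed.
End Final.

Lemma aux1 (R : realType) (a b C g : R) : a + b = C -> b <= C / 2 -> a <= g -> C / 2 <= g.
Proof. move=> h1 h2 h3; lra. Qed.

Lemma aux2 (R : realType) (x C g : R) : x <= C -> C / 2 <= g -> x / 2 <= g.
Proof. move=> h1 h2; lra. Qed.

Theorem mainTheorem6 (R : realType) (delta : R) :
  0 < delta -> delta < 1 ->
  let eps : R := 1 / 2 + delta / 2 in
  let eps' : R := 1 / 2 in
  let c : R := 8 / delta in
  exists C : R, 0 < C /\
  exists N : nat, forall n : nat, ~~ odd n -> (N <= n)%N ->
    2 `^ (C * ((n%:R) `^ (2 - eps) * ln (n%:R)))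
      <= (#|good_graphs eps eps' c n|)%:R.
Proof.
move=> hd0 hd1 eps eps' c.
exists (1/64); split; first lra.
exists 200%N => n hodd hn.
have [N hnN] : exists N, n = (N + N)%N.
  exists n./2; rewrite addnn; have := odd_double_half n.
  by rewrite (negbTE hodd) add0n.
subst n.
have hN : (100 <= N)%N by lia.
rewrite /eps /eps' /c.
set y := (N%:R : R) `^ (2 - (1/2 + delta/2)).
have hy0 : 0 <= y by apply: powR_ge0.
set m := `|Num.floor y|%N.
have hfl : 0 <= Num.floor y by rewrite floor_ge_int.
have hmf : m%:Z = Num.floor y by rewrite /m abszE ger0_norm.
have hmM : (m <= N * N)%N.
  rewrite -(ler_nat R) natrM.
  have h1 : m%:R <= y by have := floor_le y; rewrite -hmf -pmulrn.
  apply: le_trans h1 _.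
  have h2 : y <= (N%:R : R) `^ 2.
    apply: ler_powR; last lra.
    by rewrite ler1n; lia.
  by apply: le_trans h2 _; rewrite powR_mulrn ?ler0n // expr2.
have hbad := bad_bound R delta N m hd0 hd1 hN hmf hmM.
have hfin := final_ineq R delta N m hd0 hd1 hN hmf.
set G := good_graphs _ _ _ _ in hbad *.
have hA : #|Aset N m| = 'C(N * N, m) by rewrite /Aset cards_draws card_Pset.
have hsplit := cardsID G (Aset N m).
have hG : (#|Aset N m :&: G| <= #|G|)%N by apply: subset_leq_card; apply: subsetIr.
apply: le_trans hfin _.
have hlow : ((N%:R : R) ^+ 2 / m%:R) ^+ m <= ('C(N * N, m))%:R.
  have hb := binlow (N * N) m hmM; rewrite -(ler_nat R) natrM !natrX natrM in hb.
  have [hm0|hm0] := posnP m.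
    by rewrite hm0 expr0 bin0.
  have hmR : (0 : R) < m%:R ^+ m by apply: exprn_gt0; rewrite ltr0n.
  rewrite expr_div_n ler_pdivrMr // expr2.
have hGR : ('C(N * N, m))%:R / 2 <= (#|G|%:R : R).
  have e1 : (#|Aset N m :&: G|%:R : R) + #|Aset N m :\: G|%:R = ('C(N * N, m))%:R.
    by rewrite -natrD hsplit hA.
  have e2 : (#|Aset N m :&: G|%:R : R) <= #|G|%:R by rewrite ler_nat.
  exact: aux1 e1 hbad e2.
exact: aux2 hlow hGR.
Qed.
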